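(* Let $n\ge2$. For $j\in\{1,\dots,n\}$ let $L_j\in\mathcal G(n)$ be the $n$-graph with edges $a_1\to a_2,\ a_2\to a_3,\dots,a_{n-1}\to a_n$, where $(a_1,\dots,a_n)=(2,3,\dots,j,1,j+1,\dots,n)$ is the sequence obtained from $(2,3,\dots,n)$ by inserting $1$ in position $j$ (so $L_1$ has edges $1\to2\to\dots\to n$ and $L_n$ has edges $2\to3\to\dots\to n\to1$). Then $$\sum_{j=1}^n L_j\equiv 0 \pmod{R(n)}.$$
   Context: An $n$-graph is an oriented graph with vertex set $\{1,\dots,n\}$, without loops but possibly with multiple edges; $\mathcal G(n)$ is the set of $n$-graphs and $\mathbb F\mathcal G(n)$ the vector space over a field $\mathbb F$ (characteristic $0$) with basis $\mathcal G(n)$. $R(n)\subset\mathbb F\mathcal G(n)$ is the subspace spanned by the cycle relations: (i) every $\Gamma\in\mathcal G(n)$ that contains a cycle of its underlying unoriented multigraph (two edges joining the same two vertices count as a cycle); (ii) every sum $\sum_{e\in C}\Gamma\setminus e$, where $\Gamma\in\mathcal G(n)$, $C\subset E(\Gamma)$ is an oriented cycle, and $\Gamma\setminus e$ is $\Gamma$ with the edge $e$ removed. $\equiv$ denotes equality in $\mathbb F\mathcal G(n)/R(n)$. *)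

(* Defs.v *)
From mathcomp Require Import all_boot all_algebra.
Set Implicit Arguments. Unset Strict Implicit. Unset Printing Implicit Defensive.
Import GRing.Theory.
Local Open Scope ring_scope.

(* Vertices {1,...,n} are represented by 'I_n (vertex i+1 <-> ordinal i).
   An n-graph (oriented, multiple edges allowed, no loops) is given by its
   edge-multiplicity function: G (x,y) = number of edges x -> y. *)
Definition graph (n : nat) := {ffun 'I_n * 'I_n -> nat}.

Definition is_ngraph n (G : graph n) : Prop := forall x : 'I_n, G (x, x) = 0%N.

Definition uedges n (G : graph n) (x y : 'I_n) : nat := (G (x, y) + G (y, x))%N.

(* G contains a cycle of its underlying unoriented multigraph:
   either two edges joining the same two distinct vertices, or a cycle
   through k >= 3 distinct vertices. *)
Definition has_ucycle n (G : graph n) : Prop :=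
  (exists a b : 'I_n, a != b /\ (2 <= uedges G a b)%N) \/
  (exists (k : nat) (v : 'I_k.+3 -> 'I_n),
      injective v /\ forall i, (1 <= uedges G (v i) (v (ordS i)))%N).

Definition remove_edge n (G : graph n) (e : 'I_n * 'I_n) : graph n :=
  [ffun f => (G f - (f == e))%N].

(* Elements of F G(n): (finitely supported) functions graph n -> F. *)
Definition vec (F : fieldType) n := graph n -> F.

Definition basis (F : fieldType) n (G : graph n) : vec F n :=
  fun D => (D == G)%:R.

Definition cycle_rel (F : fieldType) n (r : vec F n) : Prop :=
  (exists G : graph n, is_ngraph G /\ has_ucycle G /\
      forall D, r D = basis F G D) \/
  (exists (G : graph n) (k : nat) (v : 'I_k.+2 -> 'I_n),
      [/\ is_ngraph G, injective v,
          (forall i, (1 <= G (v i, v (ordS i)))%N) &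
          forall D, r D = \sum_(i < k.+2) basis F (remove_edge G (v i, v (ordS i))) D]).

Definition in_R (F : fieldType) n (x : vec F n) : Prop :=
  exists (m : nat) (c : 'I_m -> F) (r : 'I_m -> vec F n),
    (forall i, cycle_rel (r i)) /\ forall D, x D = \sum_(i < m) c i * r i D.

(* The vertex sequence (2,...,j,1,j+1,...,n) with j = k+1, 0-indexed:
   1,...,n-1 with 0 inserted at position k. *)
Definition Lseq (n k : nat) : seq nat :=
  take k (iota 1 n.-1) ++ 0%N :: drop k (iota 1 n.-1).

Definition Lgraph n (k : nat) : graph n :=
  [ffun e : 'I_n * 'I_n =>
     count (fun p : nat * nat => (p.1 == val e.1) && (p.2 == val e.2))
           (zip (Lseq n k) (behead (Lseq n k)))].

(* Main.v *)
Require Import Defs.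
From mathcomp Require Import all_boot all_algebra.
From mathcomp Require Import zify ring.
Set Implicit Arguments. Unset Strict Implicit. Unset Printing Implicit Defensive.
Import GRing.Theory.
Local Open Scope ring_scope.

Lemma in_R_gen (F : fieldType) n (r : vec F n) : cycle_rel r -> in_R r.
Proof.
move=> h; exists 1%N, (fun _ => 1), (fun _ => r); split => // D.
by rewrite big_ord1 mul1r.
Qed.

Lemma in_R_ext (F : fieldType) n (x y : vec F n) :
  (forall D, x D = y D) -> in_R x -> in_R y.
Proof.
move=> e [m [c [r [h1 h2]]]]; exists m, c, r; split => // D.
by rewrite -e h2.
Qed.

Lemma in_R0 (F : fieldType) n : in_R (fun _ : graph n => (0 : F)).
Proof.
exists 0%N, (fun _ => 0), (fun _ _ => 0); split => [[]|D] //.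
by rewrite big_ord0.
Qed.

Lemma in_R_add (F : fieldType) n (x y : vec F n) :
  in_R x -> in_R y -> in_R (fun D => x D + y D).
Proof.
move=> [m1 [c1 [r1 [h1 e1]]]] [m2 [c2 [r2 [h2 e2]]]].
exists (m1 + m2)%N,
  (fun i => match split i with inl j => c1 j | inr j => c2 j end),
  (fun i => match split i with inl j => r1 j | inr j => r2 j end).
split.
  by move=> i; case: (split i).
move=> D; rewrite big_split_ord e1 e2 /=.
congr (_ + _); apply: eq_bigr => i _.
  by have := unsplitK (inl i : 'I_m1 + 'I_m2); rewrite /= => ->.
by have := unsplitK (inr i : 'I_m1 + 'I_m2); rewrite /= => ->.
Qed.

Lemma in_R_scale (F : fieldType) n (a : F) (x : vec F n) :
  in_R x -> in_R (fun D => a * x D).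
Proof.
move=> [m [c [r [h e]]]]; exists m, (fun i => a * c i), r; split => // D.
by rewrite e mulr_sumr; apply: eq_bigr => i _; rewrite mulrA.
Qed.

Lemma in_R_sub (F : fieldType) n (x y : vec F n) :
  in_R x -> in_R y -> in_R (fun D => x D - y D).
Proof.
move=> hx hy; apply: in_R_add => //.
apply: (in_R_ext _ (in_R_scale (-1) hy)) => D; by rewrite mulN1r.
Qed.

Lemma in_R_sum (F : fieldType) n (f : nat -> vec F n) a b :
  (forall k, (a <= k < b)%N -> in_R (f k)) ->
  in_R (fun D => \sum_(a <= k < b) f k D).
Proof.
elim: b => [|b IH] h.
  by apply: (in_R_ext _ (in_R0 F n)) => D; rewrite big_geq.
case: (leqP a b) => hab.
  apply: (in_R_ext (x := fun D => \sum_(a <= k < b) f k D + f b D)).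
    by move=> D; rewrite big_nat_recr.
  apply: in_R_add; first by apply: IH => k /andP [h1 h2]; apply: h; lia.
  by apply: h; lia.
by apply: (in_R_ext _ (in_R0 F n)) => D; rewrite big_geq.
Qed.

Definition mkG n (f : nat -> nat -> nat) : graph n :=
  [ffun e : 'I_n * 'I_n => f (val e.1) (val e.2)].

Lemma mkG_ext n f g : (forall x y, x < n -> y < n -> f x y = g x y)%N ->
  mkG n f = mkG n g.
Proof. by move=> h; apply/ffunP => [[x y]]; rewrite !ffunE /= h. Qed.

Definition Ed (a b : nat) : nat -> nat -> nat := fun x y => (x == a) && (y == b).

Lemma remove_mkG n f a b (ha : (a < n)%N) (hb : (b < n)%N) :
  remove_edge (mkG n f) (Ordinal ha, Ordinal hb) =
  mkG n (fun x y => f x y - Ed a b x y)%N.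
Proof. by apply/ffunP => [[x y]]; rewrite !ffunE /=. Qed.

Lemma rel2 (F : fieldType) n f a b (ha : (a < n)%N) (hb : (b < n)%N) :
  a != b -> (forall x, x < n -> f x x = 0)%N -> (0 < f a b)%N -> (0 < f b a)%N ->
  in_R (fun D => basis F (mkG n (fun x y => f x y - Ed a b x y)%N) D +
                 basis F (mkG n (fun x y => f x y - Ed b a x y)%N) D).
Proof.
move=> nab hd h1 h2; apply: in_R_gen; right.
pose v := fun i : 'I_2 => if val i == 0%N then Ordinal ha else Ordinal hb.
exists (mkG n f), 0%N, v; split.
- by move=> x; rewrite ffunE /= hd.
- move=> [[|[|i]] hi] [[|[|j]] hj] //= e; apply: val_inj => //=.
  + by move: e => /(congr1 val) /= e; rewrite e eqxx in nab.
  + by move: e => /(congr1 val) /= e; rewrite e eqxx in nab.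
- by move=> [[|[|i]] hi] //=; rewrite ffunE.
- move=> D; rewrite big_ord_recl big_ord1 -!remove_mkG.
  by congr (_ + _).
Qed.

Lemma rel3 (F : fieldType) n f a b c (ha : (a < n)%N) (hb : (b < n)%N) (hc : (c < n)%N) :
  a != b -> b != c -> a != c -> (forall x, x < n -> f x x = 0)%N ->
  (0 < f a b)%N -> (0 < f b c)%N -> (0 < f c a)%N ->
  in_R (fun D => basis F (mkG n (fun x y => f x y - Ed a b x y)%N) D +
                 basis F (mkG n (fun x y => f x y - Ed b c x y)%N) D +
                 basis F (mkG n (fun x y => f x y - Ed c a x y)%N) D).
Proof.
move=> nab nbc nac hd h1 h2 h3; apply: in_R_gen; right.
pose v := fun i : 'I_3 => if val i == 0%N then Ordinal ha
   else if val i == 1%N then Ordinal hb else Ordinal hc.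
exists (mkG n f), 1%N, v; split.
- by move=> x; rewrite ffunE /= hd.
- move=> [[|[|[|i]]] hi] [[|[|[|j]]] hj] //= e; apply: val_inj => //=;
  move: e => /(congr1 val) /= e;
  by rewrite e eqxx in nab nbc nac.
- by move=> [[|[|[|i]]] hi] //=; rewrite ffunE.
- move=> D; rewrite !big_ord_recl big_ord0 addr0 -!remove_mkG addrA.
  by [].
Qed.
Local Close Scope ring_scope.

Definition cnt (a b : nat) (s : seq nat) :=
  count (fun p : nat * nat => (p.1 == a) && (p.2 == b)) (zip s (behead s)).

Lemma cnt_cons a b x s : cnt a b (x :: s) =
  ((if s is y :: _ then (x == a) && (y == b) else false) : nat) + cnt a b s.
Proof. by case: s. Qed.

Lemma cnt_iota a b i l : cnt a b (iota i l) = (i <= a) && (b == a.+1) && (b < i + l).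
Proof.
elim: l i => [|l IH] i; first by rewrite /cnt /=; lia.
rewrite [iota _ _]/= cnt_cons IH; case: l IH => [|l] IH /=; lia.
Qed.

Lemma last_iota x i l : last x (iota i l.+1) = i + l.
Proof. elim: l x i => [|l IH] x i; first by rewrite /= addn0.
by rewrite -addSnnS -(IH i i.+1). Qed.

Lemma cnt_cat a b x u y w : cnt a b (x :: u ++ y :: w) =
  cnt a b (x :: u) + cnt a b (y :: w) + ((last x u == a) && (y == b)).
Proof.
elim: u x => [|z u IH] x; first by rewrite /= cnt_cons /cnt /=; lia.
rewrite cat_cons cnt_cons IH [cnt a b (x :: z :: u)]cnt_cons /=; lia.
Qed.

Definition Lf (k : nat) : nat -> nat -> nat := fun x y =>
  ((0 < x) && (y == x.+1) && (x != k)) + ((x == k) && (y == 0) && (0 < k))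
  + ((x == 0) && (y == k.+1)).

Lemma Lgraph_eq m k : k < m.+2 -> Lgraph m.+2 k = mkG m.+2 (Lf k).
Proof.
move=> hk; apply/ffunP => [[x y]]; rewrite !ffunE /=.
have hx := ltn_ord x; have hy := ltn_ord y.
move: (nat_of_ord x) (nat_of_ord y) hx hy => a b ha hb.
change (cnt a b (Lseq m.+2 k) = Lf k a b).
rewrite /Lseq (_ : m.+2.-1 = m.+1) //.
rewrite take_iota drop_iota.
have -> : minn k m.+1 = k by lia.
case: k hk => [|k] hk.
  rewrite addn0 subn0 cat0s cnt_cons cnt_iota /= /Lf; lia.
rewrite [iota 1 k.+1]/= cnt_cat.
have -> : last 1 (iota 2 k) = k.+1 by case: k {hk} => [|k] //; rewrite last_iota; lia.
change (1 :: iota 2 k) with (iota 1 k.+1).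
rewrite cnt_cons !cnt_iota.
case E: (m.+1 - k.+1) => [|r] /=; rewrite /Lf /=; lia.
Qed.
Local Open Scope ring_scope.

Definition Pf : nat -> nat -> nat := fun x y => (0 < x)%N && (y == x.+1).
Definition Qf k : nat -> nat -> nat := fun x y => (0 < x)%N && (y == x.+1) && (x != k).
Definition Af k : nat -> nat -> nat := fun x y => (Qf k x y + Ed 0 k.+1 x y + Ed k.+1 k x y)%N.
Definition Bf k : nat -> nat -> nat := fun x y => (Qf k x y + Ed k 0 x y + Ed k.+1 k x y)%N.
Definition Tf v : nat -> nat -> nat := fun x y => (Pf x y + Ed 0 v x y)%N.
Definition Sf v : nat -> nat -> nat := fun x y => (Pf x y + Ed v 0 x y)%N.
Definition Kf k : nat -> nat -> nat := fun x y => (Lf k x y + Ed k.+1 k x y)%N.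
Definition G2a k : nat -> nat -> nat := fun x y => (Pf x y + Ed 0 k.+1 x y + Ed k.+1 k x y)%N.
Definition G2b k : nat -> nat -> nat := fun x y => (Pf x y + Ed k 0 x y + Ed k.+1 k x y)%N.
Definition G2c v : nat -> nat -> nat := fun x y => (Pf x y + Ed v 0 x y + Ed 0 v x y)%N.

Ltac solve_nat := cbv beta delta [Kf Lf Af Bf Tf Sf G2a G2b G2c Qf Pf Ed]; lia.

Lemma R3 (F : fieldType) n k : (1 <= k)%N -> (k.+1 < n)%N ->
  in_R (fun D => basis F (mkG n (Lf k)) D + basis F (mkG n (Af k)) D
                 + basis F (mkG n (Bf k)) D).
Proof.
move=> h1 h2.
have hk : (k < n)%N by lia.
have h0 : (0 < n)%N by lia.
have := @rel3 F n (Kf k) k 0 k.+1 hk h0 h2.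
rewrite (@mkG_ext n (fun x y => Kf k x y - Ed k 0 x y)%N (Af k)); last by move=> *; solve_nat.
rewrite (@mkG_ext n (fun x y => Kf k x y - Ed 0 k.+1 x y)%N (Bf k)); last by move=> *; solve_nat.
rewrite (@mkG_ext n (fun x y => Kf k x y - Ed k.+1 k x y)%N (Lf k)); last by move=> *; solve_nat.
move=> H; apply: (in_R_ext _ (H _ _ _ _ _ _ _)).
- by move=> D; rewrite addrC addrA.
- apply/eqP; lia.
- apply/eqP; lia.
- apply/eqP; lia.
- move=> *; solve_nat.
- solve_nat.
- solve_nat.
- solve_nat.
Qed.

Lemma R2a (F : fieldType) n k : (1 <= k)%N -> (k.+1 < n)%N ->
  in_R (fun D => basis F (mkG n (Af k)) D + basis F (mkG n (Tf k.+1)) D).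
Proof.
move=> h1 h2.
have hk : (k < n)%N by lia.
have := @rel2 F n (G2a k) k k.+1 hk h2.
rewrite (@mkG_ext n (fun x y => G2a k x y - Ed k k.+1 x y)%N (Af k)); last by move=> *; solve_nat.
rewrite (@mkG_ext n (fun x y => G2a k x y - Ed k.+1 k x y)%N (Tf k.+1)); last by move=> *; solve_nat.
move=> H; apply: H.
- apply/eqP; lia.
- move=> *; solve_nat.
- solve_nat.
- solve_nat.
Qed.

Lemma R2b (F : fieldType) n k : (1 <= k)%N -> (k.+1 < n)%N ->
  in_R (fun D => basis F (mkG n (Bf k)) D + basis F (mkG n (Sf k)) D).
Proof.
move=> h1 h2.
have hk : (k < n)%N by lia.
have := @rel2 F n (G2b k) k k.+1 hk h2.
rewrite (@mkG_ext n (fun x y => G2b k x y - Ed k k.+1 x y)%N (Bf k)); last by move=> *; solve_nat.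
rewrite (@mkG_ext n (fun x y => G2b k x y - Ed k.+1 k x y)%N (Sf k)); last by move=> *; solve_nat.
move=> H; apply: H.
- apply/eqP; lia.
- move=> *; solve_nat.
- solve_nat.
- solve_nat.
Qed.

Lemma R2c (F : fieldType) n k : (1 <= k)%N -> (k < n)%N ->
  in_R (fun D => basis F (mkG n (Tf k)) D + basis F (mkG n (Sf k)) D).
Proof.
move=> h1 h2.
have h0 : (0 < n)%N by lia.
have := @rel2 F n (G2c k) k 0 h2 h0.
rewrite (@mkG_ext n (fun x y => G2c k x y - Ed k 0 x y)%N (Tf k)); last by move=> *; solve_nat.
rewrite (@mkG_ext n (fun x y => G2c k x y - Ed 0 k x y)%N (Sf k)); last by move=> *; solve_nat.
move=> H; apply: H.
- apply/eqP; lia.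
- move=> *; solve_nat.
- solve_nat.
- solve_nat.
Qed.

Theorem lemma4p6 (F : fieldType) (charF0 : [pchar F] =i pred0) (n : nat)
  (hn : (2 <= n)%N) :
  in_R (fun D : graph n => \sum_(j < n) basis F (Lgraph n j) D).
Proof.
case: n hn => [|[|m]] // _.
pose b f (D : graph m.+2) := basis F (mkG m.+2 f) D.
pose X := fun D => \sum_(1 <= k < m.+1)
   ((b (Lf k) D + b (Af k) D + b (Bf k) D) - (b (Af k) D + b (Tf k.+1) D)
    - (b (Bf k) D + b (Sf k) D) + (b (Tf k) D + b (Sf k) D))
   + (b (Tf m.+1) D + b (Sf m.+1) D).
have HX : in_R X.
  apply: in_R_add; last by apply: R2c; lia.
  apply: in_R_sum => k hk.
  apply: in_R_add; last by apply: R2c; lia.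
  apply: in_R_sub; last by apply: R2b; lia.
  apply: in_R_sub; last by apply: R2a; lia.
  by apply: R3; lia.
apply: (in_R_ext _ HX) => D.
rewrite /X.
rewrite (eq_big_nat _ _ (F2 := fun k => b (Lf k) D - (b (Tf k.+1) D - b (Tf k) D)));
  last by move=> k _; ring.
rewrite sumrB telescope_sumr //.
rewrite -(big_mkord xpredT (fun j => basis F (Lgraph m.+2 j) D)).
rewrite [RHS]big_nat_recr //= (@big_ltn _ _ _ 0 m.+1) //.
rewrite [X in _ = _ + X + _](eq_big_nat _ _ (F2 := fun k => b (Lf k) D)); last first.
  by move=> k hk; rewrite /b Lgraph_eq //; lia.
rewrite Lgraph_eq // Lgraph_eq //.
rewrite (@mkG_ext _ (Lf 0) (Tf 1)); last by move=> *; solve_nat.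
rewrite (@mkG_ext _ (Lf m.+1) (Sf m.+1)); last by move=> *; solve_nat.
rewrite /b; ring.
Qed.
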